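(* Let $H=(S_1,\dots,S_\ell)$ be a partial route. For every $H'\subseteq H$ and every $\bar x\in\mathcal{X}$, $$\bar x(H')-|V_+(H')|+1\ \ge\ W_{OF}(\bar x;H)-1.$$
   Context: $G=(V,E)$ complete undirected graph, $V=\{0\}\cup V_+$ ($V_+$ customers); capacity $C>0$; scenario demands $d^\xi\in\mathbb{Q}^{V_+}_{\ge0}$ and probabilities $p_\xi\ge0$ summing to $1$, $\bar d=\sum_\xi p_\xi d^\xi$. $f(S)=\sum_{i\in S}f(i)$; $E(S)$: edges with both ends in $S$; $E(S,T)$: edges with one end in $S$ and the other in $T$ ($S,T$ disjoint); $\delta(S)$: edges with exactly one end in $S$. $\mathcal{X}$ is one of $\mathcal{X}_{\mathrm{sub}}=\{x\in[0,2]^E: x(\delta(v))=2\ \forall v\in V_+,\ x(E(S))\le|S|-1\ \forall\emptyset\ne S\subseteq V_+\}$ or $\mathcal{X}_{\mathrm{cvrp}}=\mathcal{X}_{\mathrm{sub}}\cap\{x:x(\delta(0))=2k,\ x(E(S))\le|S|-\lceil\bar d(S)/C\rceil\}$. A partial route $H=(S_1,\dots,S_\ell)$ is a tuple of pairwise disjoint nonempty subsets of $V_+$ with no index $i$ such that both $S_i$ and $S_{i+1}$ have more than one element; $V_+(H)=\bigcup_iS_i$; $H'\subseteq H$ means $H'=(S_i,\dots,S_j)$ for some $1\le i\le j\le\ell$. $x(H)=\sum_{i\in[\ell]}x(E(S_i))+\sum_{i\in[\ell-1]}x(E(S_i,S_{i+1}))$, and $W_{OF}(x;H)=1+(x(H)-|V_+(H)|+1)+\sum_{i\in\{2,\ell-1\}\cap[\ell]}(x(E(S_i))-|S_i|+1)$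 (the index set $\{2,\ell-1\}\cap[\ell]$ is a set, so a repeated index is counted once). *)

(* Defs.v *)
From mathcomp Require Import all_boot all_order all_algebra.
Set Implicit Arguments. Unset Strict Implicit. Unset Printing Implicit Defensive.
Import Order.TTheory GRing.Theory Num.Theory.
Local Open Scope ring_scope.

(* Edges of the complete undirected graph: 2-element subsets of V.
   A vector x in R^E is a function {set V} -> R (only values on edges matter). *)

Definition is_edge (V : finType) (e : {set V}) : bool := #|e| == 2%N.

Definition Vplus (V : finType) (o : V) : {set V} := [set v | v != o].

Definition xE (R : numDomainType) (V : finType) (x : {set V} -> R) (S : {set V}) : R :=
  \sum_(e : {set V} | is_edge e && (e \subset S)) x e.

Definition xES (R : numDomainType) (V : finType) (x : {set V} -> R) (S T : {set V}) : R :=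
  \sum_(e : {set V} | [&& is_edge e, #|e :&: S| == 1%N & #|e :&: T| == 1%N]) x e.

Definition xdelta (R : numDomainType) (V : finType) (x : {set V} -> R) (S : {set V}) : R :=
  \sum_(e : {set V} | is_edge e && (#|e :&: S| == 1%N)) x e.

Definition dbar (R : numFieldType) (V Xi : finType) (p : Xi -> R) (d : Xi -> V -> rat) (v : V) : R :=
  \sum_(xi : Xi) p xi * ratr (d xi v).

Definition Xsub (R : numDomainType) (V : finType) (o : V) (x : {set V} -> R) : Prop :=
  [/\ (forall e : {set V}, is_edge e -> 0 <= x e <= 2),
      (forall v : V, v != o -> xdelta x [set v] = 2) &
      (forall S : {set V}, S != set0 -> S \subset Vplus o -> xE x S <= #|S|%:R - 1)].

Definition Xcvrp (R : archiRealFieldType) (V : finType) (o : V) (k : nat) (C : R)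
    (db : V -> R) (x : {set V} -> R) : Prop :=
  [/\ Xsub o x,
      xdelta x [set o] = 2 * k%:R &
      (forall S : {set V}, S != set0 -> S \subset Vplus o ->
         xE x S <= #|S|%:R - (Num.ceil ((\sum_(i in S) db i) / C))%:~R)].

(* partial route H = (S_1,...,S_l) as a sequence (0-based: S_{i+1} = nth set0 H i) *)
Definition partial_route (V : finType) (o : V) (H : seq {set V}) : Prop :=
  [/\ (forall i, (i < size H)%N -> nth set0 H i != set0 /\ nth set0 H i \subset Vplus o),
      (forall i j, (i < size H)%N -> (j < size H)%N -> i != j ->
         [disjoint nth set0 H i & nth set0 H j]) &
      (forall i, (i.+1 < size H)%N ->
         ~~ ((1 < #|nth set0 H i|)%N && (1 < #|nth set0 H i.+1|)%N))].

Definition VpH (V : finType) (H : seq {set V}) : {set V} := \bigcup_(S <- H) S.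

Definition xH (R : numDomainType) (V : finType) (x : {set V} -> R) (H : seq {set V}) : R :=
  \sum_(i < size H) xE x (nth set0 H i)
  + \sum_(i < (size H).-1) xES x (nth set0 H i) (nth set0 H i.+1).

(* W_OF(x;H); the extra sum ranges over the 1-based index set {2, l-1} ∩ [l] *)
Definition WOF (R : numDomainType) (V : finType) (x : {set V} -> R) (H : seq {set V}) : R :=
  1 + (xH x H - #|VpH H|%:R + 1)
  + \sum_(1 <= i < (size H).+1 | (i == 2%N) || (i == (size H).-1))
      (xE x (nth set0 H i.-1) - #|nth set0 H i.-1|%:R + 1).

(* H' = (S_i,...,S_j), 0-based indices i <= j < l *)
Definition subroute (V : finType) (H : seq {set V}) (i j : nat) : seq {set V} :=
  take (j - i).+1 (drop i H).

(* Main.v *)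
Require Import Defs.
From mathcomp Require Import all_boot all_order all_algebra.
From mathcomp Require Import ring lra zify.
Import Order.TTheory GRing.Theory Num.Theory.
Local Open Scope ring_scope.

Lemma edgeP (V : finType) (e : {set V}) : is_edge e ->
  exists u v, u != v /\ e = [set u; v].
Proof. by move/cards2P. Qed.

Lemma sub_edge (V : finType) (u v : V) (S : {set V}) :
  ([set u; v] \subset S) = (u \in S) && (v \in S).
Proof. by rewrite subUset !sub1set. Qed.

Lemma card1_edge (V : finType) (u v : V) (S : {set V}) : u != v ->
  (#|[set u; v] :&: S| == 1%N) = ((u \in S) != (v \in S)).
Proof.
move=> uv.
have E: [set u; v] :&: S = (if u \in S then [set u] else set0) :|: (if v \in S then [set v] else set0).
  apply/setP=> w; rewrite !inE.
  case hu: (u \in S); case hv: (v \in S); rewrite ?inE ?set0U ?setU0 ?inE;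
  have [wu|wu] := eqVneq w u; have [wv|wv] := eqVneq w v; rewrite ?wu ?wv ?hu ?hv //= ?andbF ?andbT //.
  all: try by move: uv; rewrite -wu -wv eqxx.
  all: try by rewrite -wv hv in hu. 

rewrite E.
case: (u \in S) (v \in S) => [] [] /=; rewrite ?set0U ?setU0 ?cards1 ?cards0 ?cards2 ?uv //.
Qed.

Lemma disj_pt (V : finType) (S T : {set V}) : [disjoint S & T] ->
  forall w, ~~ ((w \in S) && (w \in T)).
Proof. by move/disjoint_setI0=> h w; rewrite -in_setI h inE. Qed.

Lemma sum_mono (R : numDomainType) (V : finType) (x : {set V} -> R)
  (P Q : pred {set V}) :
  (forall e, is_edge e -> 0 <= x e) ->
  (forall e, is_edge e -> P e -> Q e) ->
  \sum_(e | is_edge e && P e) x e <= \sum_(e | is_edge e && Q e) x e.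
Proof.
move=> x0 PQ.
rewrite [X in _ <= X](bigID P) /=.
have ->: \sum_(e | (is_edge e && Q e) && P e) x e = \sum_(e | is_edge e && P e) x e.
  apply: eq_bigl => e; case E: (is_edge e) => //=; case F: (P e); rewrite ?andbF ?andbT //.
  by rewrite (PQ e E F).
rewrite lerDl; apply: sumr_ge0 => e /andP[/andP[E _] _]; exact: x0.
Qed.

Lemma sum_split (R : numDomainType) (V : finType) (x : {set V} -> R)
  (P P1 P2 : pred {set V}) :
  (forall e, is_edge e -> P e = P1 e || P2 e) ->
  (forall e, is_edge e -> ~~ (P1 e && P2 e)) ->
  \sum_(e | is_edge e && P e) x e =
  \sum_(e | is_edge e && P1 e) x e + \sum_(e | is_edge e && P2 e) x e.
Proof.
move=> hP hD.
rewrite (bigID P1) /=; congr (_ + _); apply: eq_bigl => e;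
  case E: (is_edge e) => //=; rewrite hP //; move: (hD e E);
  by case: (P1 e) (P2 e) => [] [].
Qed.

Lemma xE_ge0 (R : numDomainType) (V : finType) (x : {set V} -> R) (S : {set V}) :
  (forall e, is_edge e -> 0 <= x e) -> 0 <= xE x S.
Proof. by move=> x0; apply: sumr_ge0 => e /andP[E _]; exact: x0. Qed.

Lemma xES_ge0 (R : numDomainType) (V : finType) (x : {set V} -> R) (S T : {set V}) :
  (forall e, is_edge e -> 0 <= x e) -> 0 <= xES x S T.
Proof. by move=> x0; apply: sumr_ge0 => e /andP[E _]; exact: x0. Qed.

Lemma xES_sym (R : numDomainType) (V : finType) (x : {set V} -> R) (S T : {set V}) :
  xES x S T = xES x T S.
Proof.
by apply: eq_bigl => e; case: (is_edge e); case: (#|e :&: S| == 1%N); case: (#|e :&: T| == 1%N).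
Qed.

Lemma xE1 (R : numDomainType) (V : finType) (x : {set V} -> R) (v : V) :
  xE x [set v] = 0.
Proof.
apply: big1 => e /andP[/edgeP [a [b [ab ->]]]].
rewrite sub_edge !inE => /andP[/eqP ea /eqP eb].
by move: ab; rewrite ea eb eqxx.
Qed.

Lemma xE_U (R : numDomainType) (V : finType) (x : {set V} -> R) (S T : {set V}) :
  [disjoint S & T] -> xE x (S :|: T) = xE x S + xE x T + xES x S T.
Proof.
move=> /disj_pt d; rewrite /xE /xES -addrA.
rewrite (@sum_split _ _ _ _ (fun e => e \subset S)
   (fun e => (e \subset T) || ((#|e :&: S| == 1%N) && (#|e :&: T| == 1%N)))).
- congr (_ + _).
  apply: (@sum_split _ _ _ _ (fun e => e \subset T)
   (fun e => ((#|e :&: S| == 1%N) && (#|e :&: T| == 1%N)))).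
  + by [].
  + move=> e /edgeP [u [v [uv ->]]]; rewrite !sub_edge !card1_edge //.
    move: (d u) (d v); by case: (u \in S) (v \in S) (u \in T) (v \in T) => [] [] [] [].
- move=> e /edgeP [u [v [uv ->]]]; rewrite !sub_edge !card1_edge // !inE.
  move: (d u) (d v); by case: (u \in S) (v \in S) (u \in T) (v \in T) => [] [] [] [].
- move=> e /edgeP [u [v [uv ->]]]; rewrite !sub_edge !card1_edge //.
  move: (d u) (d v); by case: (u \in S) (v \in S) (u \in T) (v \in T) => [] [] [] [].
Qed.

Lemma xES_mono (R : numDomainType) (V : finType) (x : {set V} -> R) (S T T' : {set V}) :
  (forall e, is_edge e -> 0 <= x e) ->
  [disjoint S & T'] -> T \subset T' -> xES x S T <= xES x S T'.
Proof.
move=> x0 /disj_pt d /subsetP sT.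
apply: sum_mono => // e /edgeP [u [v [uv ->]]]; rewrite !card1_edge //.
have hu: (u \in T) ==> (u \in T') by apply/implyP=> /sT.
have hv: (v \in T) ==> (v \in T') by apply/implyP=> /sT.
move: (d u) (d v) hu hv.
by case: (u \in S) (v \in S) (u \in T) (v \in T) (u \in T') (v \in T') => [] [] [] [] [] [].
Qed.

Lemma deg_bound {R : numDomainType} {V : finType} {o : V} {x : {set V} -> R} {v : V} {A B : {set V}} :
  Xsub o x -> v != o -> [disjoint A & B] -> v \notin A -> v \notin B ->
  xES x [set v] A + xES x [set v] B <= 2.
Proof.
move=> [x0 xd _] vo /disj_pt d vA vB.
have x0' : forall e, is_edge e -> 0 <= x e by move=> e /x0 /andP[].
rewrite -(xd v vo) /xES /xdelta.
rewrite -(@sum_split _ _ _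
  (fun e => (#|e :&: [set v]| == 1%N) && ((#|e :&: A| == 1%N) || (#|e :&: B| == 1%N)))).
- apply: sum_mono => // e _ /andP[] //.
- move=> e _; by case: (#|e :&: [set v]| == 1%N); case: (#|e :&: A| == 1%N).
- move=> e /edgeP [a [b [ab ->]]]; rewrite !card1_edge // !inE.
  have h1 : (a == v) ==> ((a \notin A) && (a \notin B)) by apply/implyP=> /eqP->; rewrite vA vB.
  have h2 : (b == v) ==> ((b \notin A) && (b \notin B)) by apply/implyP=> /eqP->; rewrite vA vB.
  have h3 : ~~ ((a == v) && (b == v)) by apply/negP=> /andP[/eqP ea /eqP eb]; move: ab; rewrite ea eb eqxx.
  move: (d a) (d b) h1 h2 h3.
  by case: (a == v) (b == v) (a \in A) (b \in A) (a \in B) (b \in B) => [] [] [] [] [] [].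
Qed.

Lemma pt_disj (V : finType) (S T : {set V}) :
  (forall w, ~~ ((w \in S) && (w \in T))) -> [disjoint S & T].
Proof. by move=> h; rewrite -setI_eq0; apply/eqP/setP=> w; rewrite !inE; apply: negbTE. Qed.

Lemma disjU (V : finType) (S A B : {set V}) :
  [disjoint S & A :|: B] = [disjoint S & A] && [disjoint S & B].
Proof.
apply/idP/andP.
  move/disj_pt=> d; split; apply: pt_disj => w; move: (d w); rewrite !inE;
  by case: (w \in S) (w \in A) (w \in B) => [] [] [].
case=> /disj_pt d1 /disj_pt d2; apply: pt_disj => w; move: (d1 w) (d2 w); rewrite !inE.
by case: (w \in S) (w \in A) (w \in B) => [] [] [].
Qed.

Definition adj {V : finType} (S T : {set V}) : bool := ~~ ((1 < #|S|)%N && (1 < #|T|)%N).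

Definition pr {V : finType} (o : V) (G : seq {set V}) : bool :=
  [&& all (fun S => (S != set0) && (S \subset Vplus o)) G,
      pairwise (fun S T : {set V} => [disjoint S & T]) G & sorted (@adj V) G].

Lemma pr_partial (V : finType) (o : V) (H : seq {set V}) : partial_route o H -> pr o H.
Proof.
case=> h1 h2 h3; apply/and3P; split.
- apply/(all_nthP set0) => k hk; by case: (h1 k hk) => -> ->.
- apply/(pairwiseP set0) => a b ha hb ab; apply: h2 => //; by rewrite neq_ltn ab.
- apply/(sortedP set0) => k hk; exact: h3.
Qed.

Lemma pr_all {V : finType} {o : V} {G : seq {set V}} k : pr o G -> (k < size G)%N ->
  nth set0 G k != set0 /\ nth set0 G k \subset Vplus o.
Proof. by case/and3P=> /(all_nthP set0) h _ _ /h /andP[]. Qed.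

Lemma pr_disj {V : finType} {o : V} {G : seq {set V}} a b : pr o G -> (a < b)%N -> (b < size G)%N ->
  [disjoint nth set0 G a & nth set0 G b].
Proof.
case/and3P=> _ /(pairwiseP set0) h _ ab bs; apply: h => //; rewrite inE //.
exact: ltn_trans ab bs.
Qed.

Lemma pr_adj {V : finType} {o : V} {G : seq {set V}} k : pr o G -> (k.+1 < size G)%N ->
  adj (nth set0 G k) (nth set0 G k.+1).
Proof. by case/and3P=> _ _ /(sortedP set0) h /h. Qed.

Lemma VpH_cons (V : finType) (S : {set V}) (G : seq {set V}) : VpH (S :: G) = S :|: VpH G.
Proof. by rewrite /VpH big_cons. Qed.

Lemma VpH_cat (V : finType) (G1 G2 : seq {set V}) : VpH (G1 ++ G2) = VpH G1 :|: VpH G2.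
Proof. by rewrite /VpH big_cat. Qed.

Lemma VpH_rev (V : finType) (G : seq {set V}) : VpH (rev G) = VpH G.
Proof. by rewrite /VpH big_rev. Qed.

Lemma disj_VpH (V : finType) (S : {set V}) (G : seq {set V}) :
  all (fun T : {set V} => [disjoint S & T]) G -> [disjoint S & VpH G].
Proof.
elim: G => [|T G IH] /=.
  by move=> _; apply: pt_disj => w; rewrite /VpH big_nil inE andbF.
by case/andP=> d /IH; rewrite VpH_cons disjU d.
Qed.

Lemma disj_VpH2 (V : finType) (G1 G2 : seq {set V}) :
  allrel (fun S T : {set V} => [disjoint S & T]) G1 G2 -> [disjoint VpH G1 & VpH G2].
Proof.
elim: G1 => [|S G1 IH] /=.
  by move=> _; apply: pt_disj => w; rewrite /VpH big_nil inE.
rewrite allrel_consl => /andP[/disj_VpH d /IH d2].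
rewrite VpH_cons disjoint_sym disjU disjoint_sym d /= disjoint_sym //.
Qed.

Lemma cardsU_disj {V : finType} {A B : {set V}} : [disjoint A & B] ->
  #|A :|: B| = (#|A| + #|B|)%N.
Proof. by move=> d; rewrite cardsU (disjoint_setI0 d) cards0 subn0. Qed.

Lemma pr_cons {V : finType} {o : V} {S : {set V}} {G : seq {set V}} : pr o (S :: G) ->
  pr o G /\ [disjoint S & VpH G].
Proof.
case/and3P=> /= /andP[_ a] /andP[d p] s; split.
  by apply/and3P; split => //; exact: path_sorted s.
exact: disj_VpH.
Qed.

Lemma pr_cat {V : finType} {o : V} {G1 G2 : seq {set V}} : pr o (G1 ++ G2) ->
  [/\ pr o G1, pr o G2 & [disjoint VpH G1 & VpH G2]].
Proof.
case/and3P; rewrite all_cat pairwise_cat => /andP[a1 a2] /and3P[r p1 p2] /cat_sorted2 [s1 s2].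
split; first by apply/and3P. by apply/and3P. exact: disj_VpH2.
Qed.

Lemma pairwise_rev_sym (T : Type) (r : T -> T -> bool) (s : seq T) :
  (forall a b, r a b = r b a) -> pairwise r (rev s) = pairwise r s.
Proof.
move=> sym; elim: s => [|a s IH] //=.
rewrite rev_cons pairwise_rcons all_rev IH; congr (_ && _); apply: eq_all => b; exact: sym.
Qed.

Lemma pr_rev {V : finType} {o : V} {G : seq {set V}} : pr o G -> pr o (rev G).
Proof.
case/and3P=> a p s; apply/and3P; split.
- by rewrite all_rev.
- by rewrite pairwise_rev_sym // => A B; rewrite disjoint_sym.
- rewrite rev_sorted; case: G {a p} s => //= A G.
  by rewrite (@eq_path _ _ (@adj V)) // => B C; rewrite /adj andbC.
Qed.

Lemma VpH_ne0 {V : finType} {o : V} {G : seq {set V}} : pr o G -> G != [::] ->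
  VpH G != set0 /\ VpH G \subset Vplus o.
Proof.
elim: G => [|S G IH] // pG _.
have [nS sS] := pr_all 0%N pG isT.
case: (pr_cons pG) => pG' _.
rewrite VpH_cons setU_eq0 negb_and nS /=; split => //.
rewrite subUset sS /=.
case: G IH pG pG' {nS sS} => [|T G] IH pG pG'.
  by rewrite /VpH big_nil sub0set.
by case: (IH pG' isT).
Qed.

Lemma xH1 (R : numDomainType) (V : finType) (x : {set V} -> R) (S : {set V}) :
  xH x [:: S] = xE x S.
Proof. by rewrite /xH /= big_ord1 big_ord0 addr0. Qed.

Lemma xH_cons2 (R : numDomainType) (V : finType) (x : {set V} -> R) (S T : {set V}) (G : seq {set V}) :
  xH x (S :: T :: G) = xE x S + xES x S T + xH x (T :: G).
Proof.
rewrite /xH /= big_ord_recl [X in _ + X = _]big_ord_recl /=.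
under eq_bigr do rewrite add0n.
under [X in _ + (_ + X) = _]eq_bigr do rewrite add0n.
by rewrite addrACA.
Qed.

Lemma xH_cat (R : numDomainType) (V : finType) (x : {set V} -> R) (S T : {set V}) (s1 s2 : seq {set V}) :
  xH x (S :: s1 ++ T :: s2) = xH x (S :: s1) + xES x (last S s1) T + xH x (T :: s2).
Proof.
elim: s1 S => [|S' s1 IH] S /=.
  by rewrite xH_cons2 xH1.
by rewrite xH_cons2 IH xH_cons2 /=; ring.
Qed.

Lemma xH_rev (R : numDomainType) (V : finType) (x : {set V} -> R) (G : seq {set V}) :
  xH x (rev G) = xH x G.
Proof.
case: G => [|S G] //.
elim: G S => [|T G IH] S //.
rewrite rev_cons.
case E: (rev (T :: G)) => [|A s1].
  by move: (congr1 size E); rewrite size_rev.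
have lT : last A s1 = T.
  by rewrite -[last A s1]/(last set0 (A :: s1)) -E rev_cons last_rcons.
rewrite -cats1 xH_cat -E IH lT xH1 xH_cons2 xES_sym; ring.
Qed.

Lemma fbound {R : realDomainType} {V : finType} {o : V} {x : {set V} -> R} {G : seq {set V}} :
  Xsub o x -> pr o G -> G != [::] -> xH x G <= xE x (VpH G).
Proof.
move=> xs; have x0 : forall e, is_edge e -> 0 <= x e by case: xs => h _ _ e /h /andP[].
elim: G => [|S G IH] // pG _.
case: (pr_cons pG) => pG' dS.
case: G IH pG pG' dS => [|T G] IH pG pG' dS.
  by rewrite xH1 VpH_cons /VpH big_nil setU0.
rewrite xH_cons2 VpH_cons xE_U //.
have h1 := IH pG' isT.
have h2 : xES x S T <= xES x S (VpH (T :: G)).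
  by apply: xES_mono => //; rewrite VpH_cons subsetUl.
lra.
Qed.

Lemma xsub_bound {R : realDomainType} {V : finType} {o : V} {x : {set V} -> R} {S : {set V}} :
  Xsub o x -> S != set0 -> S \subset Vplus o -> xE x S <= #|S|%:R - 1.
Proof. by case=> _ _ h; apply: h. Qed.

Lemma fbound2 {R : realDomainType} {V : finType} {o : V} {x : {set V} -> R} {G : seq {set V}} :
  Xsub o x -> pr o G -> G != [::] -> xH x G <= #|VpH G|%:R - 1.
Proof.
move=> xs pG nG; have [n s] := VpH_ne0 pG nG.
have := fbound xs pG nG; have := xsub_bound xs n s; lra.
Qed.

Definition gS {R : numDomainType} {V : finType} (x : {set V} -> R) (S : {set V}) : R :=
  xE x S - #|S|%:R + 1.

Lemma single {V : finType} {S : {set V}} : S != set0 -> (#|S| <= 1)%N -> exists v, S = [set v].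
Proof.
move=> n h; apply/cards1P; rewrite eqn_leq h /=.
by rewrite card_gt0.
Qed.

Lemma in_Vplus {V : finType} {o : V} {S : {set V}} {v} : S \subset Vplus o -> v \in S -> v != o.
Proof. by move/subsetP=> h /h; rewrite inE. Qed.

Lemma RL (R : realDomainType) (V : finType) (o : V) (x : {set V} -> R) (T : {set V}) (Rt : seq {set V}) :
  Xsub o x -> pr o (T :: Rt) -> Rt != [::] ->
  xES x T (head set0 Rt) + xH x Rt - #|VpH Rt|%:R +
  (if size Rt == 1%N then gS x T else if size Rt == 2%N then gS x (head set0 Rt) else 0) <= 0.
Proof.
move=> xs pG; case: Rt pG => [|Q Rt'] // pG _ /=.
have x0 : forall e, is_edge e -> 0 <= x e by case: xs => h _ _ e /h /andP[].
have gle0 : forall k, (k < (size Rt').+2)%N -> gS x (nth set0 (T :: Q :: Rt') k) <= 0.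
  move=> k hk; have [n s] := pr_all k pG hk; have := xsub_bound xs n s; rewrite /gS; lra.
have gR0 : (if (size Rt').+1 == 1%N then gS x T else if (size Rt').+1 == 2%N then gS x Q else 0) <= 0.
  case: ifP => _; first exact: (gle0 0%N).
  case: ifP => _ //; exact: (gle0 1%N).
case: (pr_cons pG) => pG1 _; case: (pr_cons pG1) => pG2 dQ.
have [/= nT /= sT] := pr_all 0%N pG isT; have [/= nQ /= sQ] := pr_all 1%N pG isT.
have dTQ : [disjoint T & Q] := pr_disj 0 1 pG isT isT.
have BTQ : xE x (T :|: Q) <= #|T :|: Q|%:R - 1.
  apply: (xsub_bound xs); first by rewrite setU_eq0 negb_and nT.
  by rewrite subUset sT sQ.
rewrite xE_U // cardsU_disj // natrD in BTQ.
case: Rt' gle0 gR0 pG pG1 pG2 dQ => [|Q2 Rt''] gle0 gR0 pG pG1 pG2 dQ.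
  rewrite /= xH1 /VpH big_cons big_nil setU0 /gS; lra.
have [/= nQ2 /= sQ2] := pr_all 2%N pG isT.
rewrite /= in gR0.
have dTQ2 : [disjoint T & Q2] := pr_disj 0 2 pG isT isT.
have dQQ2 : [disjoint Q & Q2] := pr_disj 1 2 pG isT isT.
rewrite VpH_cons cardsU_disj // natrD xH_cons2.
case: (leqP #|Q| 1) => hQ.
  have [v eQ] := single nQ hQ; subst Q.
  have hv := in_Vplus sQ (set11 v).
  have vT : v \notin T by rewrite -disjoints1 disjoint_sym.
  have vQ2 : v \notin Q2 by rewrite -disjoints1.
  have D := deg_bound xs hv dTQ2 vT vQ2.
  have F := fbound2 xs pG2 isT.
  rewrite xE1 cards1 xES_sym. lra.
have hT : (#|T| <= 1)%N.
  by move: (pr_adj 0 pG isT); rewrite /adj /= hQ andbT -leqNgt.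
have hQ2 : (#|Q2| <= 1)%N.
  by move: (pr_adj 1 pG isT); rewrite /adj /= hQ /= -leqNgt.
have [t eT] := single nT hT; subst T.
have [w eQ2] := single nQ2 hQ2; subst Q2.
have BQQ2 : xE x (Q :|: [set w]) <= #|Q :|: [set w]|%:R - 1.
  apply: (xsub_bound xs); first by rewrite setU_eq0 negb_and nQ.
  by rewrite subUset sQ sQ2.
rewrite xE_U // cardsU_disj // natrD xE1 cards1 in BQQ2.
rewrite xE1 cards1 in BTQ.
case: Rt'' gle0 gR0 pG pG1 pG2 dQ => [|Q3 R4] gle0 gR0 pG pG1 pG2 dQ.
  rewrite /= xH1 xE1 /VpH big_cons big_nil setU0 cards1 /gS; lra.
case: (pr_cons pG2) => pG3 dQ2.
have hw := in_Vplus sQ2 (set11 w).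
have dQQ3 : [disjoint Q & Q3] := pr_disj 1 3 pG isT isT.
have wQ : w \notin Q by rewrite -disjoints1 disjoint_sym.
have wQ3 : w \notin Q3 by rewrite -disjoints1; exact: (pr_disj 2 3 pG isT isT).
have D := deg_bound xs hw dQQ3 wQ wQ3.
have F := fbound2 xs pG3 isT.
rewrite VpH_cons cardsU_disj // natrD xH_cons2 xE1 cards1 /=.
rewrite [xES x [set w] Q]xES_sym in D.
lra.
Qed.

Lemma pick1 (R : realDomainType) (r : seq nat) (P : pred nat) (F : nat -> R) j :
  uniq r -> j \in r -> P j -> (forall k, k \in r -> P k -> F k <= 0) ->
  \sum_(k <- r | P k) F k <= F j.
Proof.
move=> u jr Pj h; rewrite big_mkcond (bigD1_seq j) //= Pj.
suff: \sum_(k <- r | k != j) (if P k then F k else 0) <= 0 by lra.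
rewrite big_seq_cond; apply: sumr_le0 => k /andP[kr _]; case: ifP => // Pk; exact: h.
Qed.

Lemma pick2 (R : realDomainType) (r : seq nat) (P : pred nat) (F : nat -> R) j1 j2 :
  uniq r -> j1 \in r -> P j1 -> j2 \in r -> P j2 -> j1 != j2 ->
  (forall k, k \in r -> P k -> F k <= 0) ->
  \sum_(k <- r | P k) F k <= F j1 + F j2.
Proof.
move=> u j1r P1 j2r P2 ne h; rewrite big_mkcond (bigD1_seq j1) //= P1.
rewrite big_mkcond (bigD1_seq j2) //= eq_sym ne P2.
suff: \sum_(k <- r | k != j2) (if k != j1 then if P k then F k else 0 else 0) <= 0 by lra.
rewrite big_seq_cond; apply: sumr_le0 => k /andP[kr _]; case: ifP => // _; case: ifP => // Pk; exact: h.
Qed.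

Lemma pick0 (R : realDomainType) (r : seq nat) (P : pred nat) (F : nat -> R) :
  (forall k, k \in r -> P k -> F k <= 0) -> \sum_(k <- r | P k) F k <= 0.
Proof.
move=> h; rewrite big_seq_cond; apply: sumr_le0 => k /andP[kr Pk]; exact: h.
Qed.

Lemma LL (R : realDomainType) (V : finType) (o : V) (x : {set V} -> R) (T : {set V}) (L : seq {set V}) :
  Xsub o x -> pr o (rcons L T) -> L != [::] ->
  xH x L + xES x (last set0 L) T - #|VpH L|%:R +
  (if size L == 1%N then gS x T else if size L == 2%N then gS x (last set0 L) else 0) <= 0.
Proof.
move=> xs p nL.
have p' := pr_rev p; rewrite rev_rcons in p'.
have nL' : rev L != [::] by rewrite -size_eq0 size_rev size_eq0.
have -> : last set0 L = head set0 (rev L).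
  by clear p p' nL'; case/lastP: L nL => [|L Q] //; rewrite rev_rcons last_rcons.
have := RL _ _ _ _ _ _ xs p' nL'.
rewrite xH_rev VpH_rev size_rev xES_sym; lra.
Qed.

Lemma xH0 (R : numDomainType) (V : finType) (x : {set V} -> R) : xH x [::] = 0.
Proof. by rewrite /xH /= !big_ord0 addr0. Qed.

Lemma xH_catL (R : numDomainType) (V : finType) (x : {set V} -> R) (S : {set V}) (s1 s2 : seq {set V}) :
  xH x (s1 ++ S :: s2) = xH x s1 + (if s1 is [::] then 0 else xES x (last set0 s1) S) + xH x (S :: s2).
Proof.
case: s1 => [|S0 s1] /=; first by rewrite xH0 !add0r.
by rewrite xH_cat.
Qed.

Lemma xH_catR (R : numDomainType) (V : finType) (x : {set V} -> R) (S : {set V}) (s1 s2 : seq {set V}) :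
  xH x ((S :: s1) ++ s2) = xH x (S :: s1) + (if s2 is T :: _ then xES x (last S s1) T else 0) + xH x s2.
Proof.
case: s2 => [|T s2] /=; first by rewrite cats0 xH0 !addr0.
by rewrite -cat_cons xH_cat.
Qed.

Lemma pr_last {V : finType} {o : V} {S : {set V}} {s1 s2 : seq {set V}} :
  pr o (S :: s1 ++ s2) -> pr o (last S s1 :: s2).
Proof.
elim: s1 S => [|S' s1 IH] S //= p.
by apply: IH; case: (pr_cons p).
Qed.

Lemma nth1_last2 (V : finType) (L : seq {set V}) : size L = 2%N -> nth set0 L 1 = last set0 L.
Proof. by case: L => [|a [|b [|c L]]]. Qed.

Theorem lemma9 (R : archiRealFieldType) (V : finType) (o : V) (Xi : finType)
    (p : Xi -> R) (d : Xi -> V -> rat) (C : R) (k : nat)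
    (H : seq {set V}) (x : {set V} -> R) :
  0 < C ->
  (forall xi, 0 <= p xi) ->
  (forall xi v, v != o -> 0 <= d xi v) ->
  \sum_(xi : Xi) p xi = 1 ->
  partial_route o H ->
  (Xsub o x \/ Xcvrp o k C (dbar p d) x) ->
  forall i j : nat, (i <= j < size H)%N ->
    WOF x H - 1 <= xH x (subroute H i j) - #|VpH (subroute H i j)|%:R + 1.
Proof.
move=> _ _ _ _ hPR hX i j /andP[ij jl].
have xs : Xsub o x by case: hX => [//|[]].
have pH := pr_partial _ _ _ hPR.
have eH : H = take i H ++ subroute H i j ++ drop j.+1 H.
  have -> : drop j.+1 H = drop (j - i).+1 (drop i H) by rewrite drop_drop; congr drop; lia.
  by rewrite /subroute !cat_take_drop.
have sL : size (take i H) = i by rewrite size_take; case: ifP => //; lia.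
have sM : size (subroute H i j) = (j - i).+1 by rewrite /subroute size_take size_drop; case: ifP => //; lia.
move: eH sL sM; move: (take i H) (drop j.+1 H) (subroute H i j) => L Rt M eH sL sM.
case: M eH sM => [|A M'] // eH sM.
have sH : size H = (i + (size M').+1 + size Rt)%N by rewrite eH !size_cat sL /=; lia.
have := pH; rewrite eH => /pr_cat [pL pMR dL].
case: (pr_cat pMR) => pM pR dMR.
have cH : #|VpH H| = (#|VpH L| + (#|VpH (A :: M')| + #|VpH Rt|))%N.
  by rewrite eH VpH_cat (cardsU_disj dL) VpH_cat (cardsU_disj dMR).
have xHH : xH x H = xH x L + (if L is [::] then 0 else xES x (last set0 L) A) +
   (xH x (A :: M') + (if Rt is T :: _ then xES x (last A M') T else 0) + xH x Rt).
  by rewrite eH xH_catL -xH_catR.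
rewrite -eH /WOF xHH cH !natrD.
set E := \sum_(1 <= k < _ | _) _.
set cL := (match L with [::] => 0 | _ :: _ => _ end).
set cR := (match Rt with [::] => 0 | _ :: _ => _ end).
set l := size H in sH E *.
have Fle0 : forall m, m \in index_iota 1 l.+1 ->
    (m == 2%N) || (m == l.-1) -> xE x (nth set0 H m.-1) - #|nth set0 H m.-1|%:R + 1 <= 0.
  move=> m; rewrite mem_index_iota => /andP[k1 kl] _.
  have hm : (m.-1 < size H)%N by rewrite -/l; clear -k1 kl; lia.
  have [n s0] := pr_all _ pH hm.
  have := xsub_bound xs n s0; lra.
have uI : uniq (index_iota 1 l.+1) by apply: iota_uniq.
have hE0 : E <= 0 by apply: pick0.
have hE1 : (2 <= l)%N -> E <= gS x (nth set0 H 1).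
  move=> l2; have a : (2 \in index_iota 1 l.+1) by rewrite mem_index_iota; clear -l2; lia.
  exact: (@pick1 _ _ _ _ 2%N uI a isT Fle0).
have hE2 : (2 <= l)%N -> E <= gS x (nth set0 H l.-2).
  move=> l2; have a : (l.-1 \in index_iota 1 l.+1) by rewrite mem_index_iota; clear -l2; lia.
  have b : (l.-1 == 2%N) || (l.-1 == l.-1) by rewrite eqxx orbT.
  exact: (@pick1 _ _ _ _ l.-1 uI a b Fle0).
have hE12 : (2 <= l)%N -> l != 3%N -> E <= gS x (nth set0 H 1) + gS x (nth set0 H l.-2).
  move=> l2 l3; have a : (2 \in index_iota 1 l.+1) by rewrite mem_index_iota; clear -l2; lia.
  have a' : (l.-1 \in index_iota 1 l.+1) by rewrite mem_index_iota; clear -l2; lia.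
  have b : (l.-1 == 2%N) || (l.-1 == l.-1) by rewrite eqxx orbT.
  have c : (2 != l.-1)%N by clear -l2 l3; lia.
  exact: (@pick2 _ _ _ _ 2%N l.-1 uI a isT a' b c Fle0).
have nLast : nth set0 H (i + size M') = last A M'.
  rewrite eH nth_cat sL ltnNge leq_addr /= addKn -[A :: M' ++ Rt]/((A :: M') ++ Rt) nth_cat /= ltnSn.
  by rewrite -[size M']/((size (A :: M')).-1) nth_last.
have nHead : nth set0 H (i + size M').+1 = head set0 Rt.
  rewrite eH nth_cat sL ltnNge (_ : (i <= (i + size M').+1)%N) /=; last by clear; lia.
  rewrite (_ : ((i + size M').+1 - i)%N = (size M').+1); last by clear; lia.
  by rewrite /= nth_cat ltnn subnn nth0.
have nFirst : (i = 1)%N -> nth set0 H 1 = A.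
  by move=> i1; rewrite eH nth_cat sL i1.
have nSecond : (i = 2)%N -> nth set0 H 1 = last set0 L.
  by move=> i2; rewrite eH nth_cat sL i2 /= nth1_last2 // sL.
have fH : xH x H <= #|VpH H|%:R - 1 by apply: fbound2 xs pH _; rewrite -size_eq0 -/l sH; clear; lia.
rewrite xHH cH !natrD -/cL -/cR in fH.
have pLA : pr o (rcons L A) by move: pH; rewrite eH /= -cat_rcons => /pr_cat [].
have pAR : pr o (last A M' :: Rt) by apply: pr_last.
have hL0 : i = 0%N -> xH x L + cL - #|VpH L|%:R = 0.
  move=> i0; move: sL; rewrite i0 => /size0nil eL; rewrite /cL eL xH0 /VpH big_nil cards0; lra.
have hL12 : (0 < i <= 2)%N -> xH x L + cL - #|VpH L|%:R + gS x (nth set0 H 1) <= 0.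
  move=> hi; have nL : L != [::] by rewrite -size_eq0 sL; clear -hi; lia.
  have := LL _ _ _ _ _ _ xs pLA nL; rewrite sL.
  have -> : cL = xES x (last set0 L) A by rewrite /cL; case: (L) nL.
  have [i1|i2] : i = 1%N \/ i = 2%N by clear -hi; lia.
  - by rewrite nFirst // i1 /= => h; lra.
  - by rewrite nSecond // i2 /= => h; lra.
have hL3 : (2 < i)%N -> xH x L + cL - #|VpH L|%:R <= 0.
  move=> hi; have nL : L != [::] by rewrite -size_eq0 sL; clear -hi; lia.
  have := LL _ _ _ _ _ _ xs pLA nL; rewrite sL.
  have -> : cL = xES x (last set0 L) A by rewrite /cL; case: (L) nL.
  rewrite (_ : (i == 1%N) = false); last by clear -hi; lia.
  rewrite (_ : (i == 2%N) = false); last by clear -hi; lia.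
  move=> h; lra.
have hR0 : size Rt = 0%N -> xH x Rt + cR - #|VpH Rt|%:R = 0.
  move=> /size0nil eR; rewrite /cR eR xH0 /VpH big_nil cards0; lra.
have hR12 : (0 < size Rt <= 2)%N -> xH x Rt + cR - #|VpH Rt|%:R + gS x (nth set0 H l.-2) <= 0.
  move=> hi; have nR : Rt != [::] by move: hi; case: (Rt).
  have := RL _ _ _ _ _ _ xs pAR nR.
  have -> : cR = xES x (last A M') (head set0 Rt) by rewrite /cR; case: (Rt) nR.
  have [r1|r2] : size Rt = 1%N \/ size Rt = 2%N by clear -hi; lia.
  - rewrite r1 /= (_ : l.-2 = (i + size M')); last by clear -sH r1; lia.
    by rewrite nLast => h; lra.
  - rewrite r2 /= (_ : l.-2 = (i + size M').+1); last by clear -sH r2; lia.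
    by rewrite nHead => h; lra.
have hR3 : (2 < size Rt)%N -> xH x Rt + cR - #|VpH Rt|%:R <= 0.
  move=> hi; have nR : Rt != [::] by move: hi; case: (Rt).
  have := RL _ _ _ _ _ _ xs pAR nR.
  have -> : cR = xES x (last A M') (head set0 Rt) by rewrite /cR; case: (Rt) nR.
  rewrite (_ : (size Rt == 1%N) = false); last by clear -hi; lia.
  rewrite (_ : (size Rt == 2%N) = false); last by clear -hi; lia.
  move=> h; lra.
have nfM : M' = [::] -> xH x (A :: M') - #|VpH (A :: M')|%:R + 1 = gS x A.
  by move=> ->; rewrite xH1 /VpH big_cons big_nil setU0.
have hi : i = 0%N \/ (0 < i <= 2)%N \/ (2 < i)%N by clear; lia.
have hr : size Rt = 0%N \/ (0 < size Rt <= 2)%N \/ (2 < size Rt)%N by clear; lia.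
have l2 : (0 < i)%N \/ (0 < size Rt)%N -> (2 <= l)%N.
  by move=> h; rewrite sH; clear -h; lia.
case: hi => [i0|[i12|i3]]; case: hr => [r0|[r12|r3]].
- have h1 := hL0 i0; have h2 := hR0 r0; lra.
- have h3 := hL0 i0; have h4 := hR12 r12; have h5 := hE2 (l2 (or_intror (proj1 (andP r12)))); lra.
- have h6 := hL0 i0; have h7 := hR3 r3; lra.
- have h8 := hL12 i12; have h9 := hR0 r0; have h10 := hE1 (l2 (or_introl (proj1 (andP i12)))); lra.
- have l2' := l2 (or_introl (proj1 (andP i12))).
  case: (eqVneq l 3%N) => l3.
    have i1 : i = 1%N by move: sH i12 r12; rewrite l3; clear; lia.
    have m0 : M' = [::] by apply: size0nil; move: sH i12 r12; rewrite l3; clear; lia.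
    have h11 := nfM m0; have h12 := hE1 l2'; rewrite nFirst // in h12; lra.
  have h13 := hL12 i12; have h14 := hR12 r12; have h15 := hE12 l2' l3; lra.
- have h16 := hL12 i12; have h17 := hR3 r3; have h18 := hE1 (l2 (or_introl (proj1 (andP i12)))); lra.
- have h19 := hL3 i3; have h20 := hR0 r0; lra.
- have h21 := hL3 i3; have h22 := hR12 r12; have h23 := hE2 (l2 (or_intror (proj1 (andP r12)))); lra.
- have h24 := hL3 i3; have h25 := hR3 r3; lra.
Qed.
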